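(* Assume the Diagonal Conjecture (DC) holds: for every $r \ge 2$, all integers $3 \le s \le t$ and all integers $k_3,\dots,k_r \ge 2$, we have $R(s,t,k_3,\dots,k_r) \ge R(s-1,t+1,k_3,\dots,k_r)$. Then for every integer $k \ge 3$ and every integer $r \ge 1$, $$R_{2r}(k)-1 \ge (R_r(k-1)-1)(R_r(k+1)-1).$$
   Context: $R(k_1,\dots,k_r)$ denotes the multicolor Ramsey number: the least $n$ such that every coloring of the edges of $K_n$ with $r$ colors contains, for some $i$, a complete subgraph $K_{k_i}$ all of whose edges have color $i$. This number does not depend on the order of the arguments. $R_r(k)=R(k,\dots,k)$ with $r$ arguments equal to $k$. *)

(* Defs.v *)
From Stdlib Require Import ClassicalEpsilon.
From mathcomp Require Import all_boot.
Set Implicit Arguments. Unset Strict Implicit. Unset Printing Implicit Defensive.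

(* An r-coloring of the edges of K_n, r = size ks: the edge {x,y} with x < y
   gets colour c x y (values of c on pairs with x >= y are irrelevant).
   ramsey_prop ks n : every such colouring contains, for some colour i,
   a set S of k_i vertices all of whose edges have colour i. *)
Definition ramsey_prop (ks : seq nat) (n : nat) : Prop :=
  forall c : 'I_n -> 'I_n -> 'I_(size ks),
    exists i : 'I_(size ks), exists S : {set 'I_n},
      #|S| = nth 0 ks i /\
      (forall x y : 'I_n, x \in S -> y \in S -> x < y -> c x y = i).

(* Multicolour Ramsey number R(k_1,...,k_r): the least n with ramsey_prop
   (such an n always exists by Ramsey's theorem; default 0 otherwise). *)
Definition Ramsey (ks : seq nat) : nat :=
  match excluded_middle_informative
          (exists n, ramsey_prop ks n /\ forall m, ramsey_prop ks m -> n <= m)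
  with
  | left h => proj1_sig (constructive_indefinite_description _ h)
  | right _ => 0
  end.

Definition Ramsey_diag (r k : nat) : nat := Ramsey (nseq r k).

Definition DiagonalConjecture : Prop :=
  forall (s t : nat) (ks : seq nat),
    3 <= s -> s <= t -> all (fun k => 2 <= k) ks ->
    Ramsey [:: s.-1, t.+1 & ks] <= Ramsey [:: s, t & ks].

(* Main.v *)
Require Import Defs.
From Stdlib Require Import ClassicalEpsilon Classical FunctionalExtensionality PropExtensionality.
From mathcomp Require Import all_boot zify.
Set Implicit Arguments. Unset Strict Implicit. Unset Printing Implicit Defensive.

Definition monoc n p (c : 'I_n -> 'I_n -> 'I_p) (i : 'I_p) (S : {set 'I_n}) :=
  forall x y, x \in S -> y \in S -> x < y -> c x y = i.

Lemma w_le_sum p (w : 'I_p -> nat) i : w i <= \sum_j w j.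
Proof. by rewrite (bigD1 i) //= leq_addr. Qed.

Lemma ramsey_sub m : forall p (w : 'I_p -> nat), 0 < p -> \sum_i w i <= m ->
  exists N, forall n (c : 'I_n -> 'I_n -> 'I_p) (A : {set 'I_n}), N <= #|A| ->
    exists i (S : {set 'I_n}), S \subset A /\ #|S| = w i /\ monoc c i S.
Proof.
elim: m => [|m IH] p w p0 Hs.
  exists 0 => n c A _; exists (Ordinal p0), set0; split; first exact: sub0set.
  split; last by move=> x y; rewrite inE.
  by rewrite cards0; move: (w_le_sum w (Ordinal p0)); lia.
case: (pickP (fun i => w i == 0)) => [i /eqP wi0 | H].
  exists 0 => n c A _; exists i, set0; split; first exact: sub0set.
  by split; [rewrite cards0 | move=> x y; rewrite inE].
pose w' (i : 'I_p) := fun j : 'I_p => if j == i then (w j).-1 else w j.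
have Hex : forall i, exists N, forall n (c : 'I_n -> 'I_n -> 'I_p) (A : {set 'I_n}),
    N <= #|A| -> exists j (S : {set 'I_n}), S \subset A /\ #|S| = w' i j /\ monoc c j S.
  move=> i; apply: IH => //.
  move: Hs; rewrite (bigD1 i) //= [X in _ -> X <= _](bigD1 i) //= /w' eqxx.
  have -> : \sum_(j < p | j != i) (if j == i then (w j).-1 else w j) =
            \sum_(j < p | j != i) w j.
    by apply: eq_bigr => j /negbTE ->.
  move: (H i) => /= /negbT; rewrite -lt0n => Hi h; by rewrite -ltnS -addSn (prednK Hi).
have [u Hu] := fin_all_exists Hex.
exists (\sum_i u i).+1 => n c A HA.
have [x0 Hx0] : exists x, x \in A.
  by apply/set0Pn; rewrite -card_gt0; lia.
case: (arg_minnP (fun y : 'I_n => val y) Hx0) => x xA xmin.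
pose B i := [set y in A :\ x | c x y == i].
have HD : #|A :\ x| = \sum_i #|B i|.
  rewrite -sum1_card (partition_big (fun y => c x y) predT) //.
  apply: eq_bigr => j _; rewrite -sum1_card; apply: eq_bigl => y.
  by rewrite !inE.
have [i Hi] : exists i, u i <= #|B i|.
  apply: NNPP => Hn.
  have Hlt : forall i, #|B i| < u i.
    by move=> i; rewrite ltnNge; apply/negP => h; apply: Hn; exists i.
  have h1 : \sum_i (#|B i| + 1) <= \sum_i u i by apply: leq_sum => i _; rewrite addn1.
  rewrite big_split /= sum1_card card_ord -HD in h1.
  have xA' : x \in A := xA; move: HA; rewrite (cardsD1 x A) xA'=> HA; rewrite (_ : \sum_i u i = \sum_(i < p) u i) // in HA; simpl in HA; have := leq_ltn_trans h1 HA; rewrite [1 + _]addnC ltn_add2l; lia.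
have [j [S [SB [cardS monoS]]]] := Hu i n c (B i) Hi.
have SA : S \subset A :\ x.
  apply: subset_trans SB _; apply/subsetP => y; rewrite inE; by case/andP.
case: (eqVneq j i) => [eji | ji].
  subst j; exists i, (x |: S); split.
    apply/subsetP => y; rewrite in_setU1 => /orP [/eqP -> //|yS].
    by move/subsetP: SA => /(_ y yS); rewrite inE => /andP [].
  split.
    rewrite cardsU1 cardS /w' eqxx.
    have -> : x \notin S by apply/negP => xS; move/subsetP: SA => /(_ x xS); rewrite in_setD1 eqxx.
    move: (H i) => /= /negbT Hi'; lia.
  move=> y z; rewrite !in_setU1 => /orP [/eqP -> | yS] /orP [/eqP -> | zS] yz.
  - by rewrite ltnn in yz.
  - by move/subsetP: SB => /(_ z zS); rewrite inE => /andP [_ /eqP].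
  - move/subsetP: SA => /(_ y yS); rewrite inE => /andP [_ yA].
    by have := xmin y yA; rewrite leqNgt yz.
  - exact: monoS.
exists j, S; split; first by apply: subset_trans SA (subD1set _ _).
by split => //; rewrite cardS /w' (negbTE ji).
Qed.
Lemma least_ex (P : nat -> Prop) N : P N -> exists n, P n /\ forall m, P m -> n <= m.
Proof.
elim: N {-2}N (leqnn N) => [|B IH] N hN PN.
  exists N; split => // m _; move: hN; lia.
case: (classic (exists m, m < N /\ P m)) => [[m [mN Pm]]|hno].
  apply: (IH m) => //; move: mN hN; lia.
exists N; split => // m Pm; rewrite leqNgt; apply/negP => mN; apply: hno; exists m; by split.
Qed.

Lemma RamseyP_of ks N : ramsey_prop ks N ->
  ramsey_prop ks (Ramsey ks) /\ forall m, ramsey_prop ks m -> Ramsey ks <= m.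
Proof.
move=> HN; rewrite /Ramsey; case: excluded_middle_informative => [h|h].
  by case: constructive_indefinite_description => x /= [].
by exfalso; apply: h; apply: least_ex HN.
Qed.

Lemma Ramsey_ext ks ks' : (forall n, ramsey_prop ks n <-> ramsey_prop ks' n) ->
  Ramsey ks = Ramsey ks'.
Proof.
move=> H.
have E : ramsey_prop ks = ramsey_prop ks'.
  by apply: functional_extensionality => n; apply: propositional_extensionality.
by rewrite /Ramsey E.
Qed.

Lemma prop_mono ks m n : m <= n -> ramsey_prop ks m -> ramsey_prop ks n.
Proof.
move=> mn Hm c.
have [i [S [cS HS]]] := Hm (fun x y => c (widen_ord mn x) (widen_ord mn y)).
exists i, (widen_ord mn @: S); split.
  rewrite card_imset // => a b /(congr1 val) /= ab; exact: val_inj.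
move=> x y /imsetP [x' x'S ->] /imsetP [y' y'S ->] /= xy; exact: HS.
Qed.

Lemma reindex ks ks' (f : 'I_(size ks) -> 'I_(size ks')) (g : 'I_(size ks') -> 'I_(size ks)) n :
  cancel g f -> (forall i, nth 0 ks' (f i) = nth 0 ks i) ->
  ramsey_prop ks n -> ramsey_prop ks' n.
Proof.
move=> gK hf H c.
have [i [S [cS HS]]] := H (fun x y => g (c x y)).
exists (f i), S; split; first by rewrite hf.
by move=> x y xS yS xy; rewrite -(HS x y xS yS xy) gK.
Qed.

Ltac split_ifs := repeat match goal with |- context [if ?b then _ else _] =>
  lazymatch b with context [if _ then _ else _] => fail | _ => case: (boolP b) => ?; simpl end end.

Definition hh (a0 a1 a2 i : nat) :=
  if i < a0 then i else if i < a0 + a1 then i + a2 else i - a1.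

Lemma swap_prop s0 s1 s2 n :
  ramsey_prop (s0 ++ s1 ++ s2) n -> ramsey_prop (s0 ++ s2 ++ s1) n.
Proof.
have E : size (s0 ++ s1 ++ s2) = size (s0 ++ s2 ++ s1) by rewrite !size_cat; lia.
pose f (i : 'I_(size (s0 ++ s1 ++ s2))) : 'I_(size (s0 ++ s2 ++ s1)) :=
  insubd (cast_ord E i) (hh (size s0) (size s1) (size s2) i).
pose g (i : 'I_(size (s0 ++ s2 ++ s1))) : 'I_(size (s0 ++ s1 ++ s2)) :=
  insubd (cast_ord (esym E) i) (hh (size s0) (size s2) (size s1) i).
apply: (@reindex _ _ f g).
  move=> j; apply: val_inj; rewrite /f /g.
  have hj : j < size s0 + (size s2 + size s1) by case: j => /= m; rewrite !size_cat.
  rewrite val_insubd /= val_insubd /=; move: (nat_of_ord j) hj => jj hj; rewrite !size_cat /hh.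
  by split_ifs; lia.
move=> i; have hi : i < size s0 + (size s1 + size s2) by case: i => /= m; rewrite !size_cat.
rewrite /f val_insubd /=; move: (nat_of_ord i) hi => ii hi; rewrite !size_cat /hh.
split_ifs; rewrite ?nth_cat; split_ifs; try lia; congr nth; lia.
Qed.

Lemma ramsey_exists ks : 0 < size ks -> exists N, ramsey_prop ks N.
Proof.
move=> s0.
have [N HN] := @ramsey_sub _ (size ks) (fun i : 'I_(size ks) => nth 0 ks i) s0 (leqnn _).
exists N => c.
have [i [S [_ [h1 h2]]]] := HN N c setT ltac:(by rewrite cardsT card_ord).
by exists i, S.
Qed.

Lemma prop0 ks : ramsey_prop ks 0 -> exists i : 'I_(size ks), nth 0 ks i = 0.
Proof.
move=> H.
have c : 'I_0 -> 'I_0 -> 'I_(size ks) by case=> m; rewrite ltn0.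
have [i [S [cS _]]] := H c.
exists i; rewrite -cS; apply/eqP; rewrite -leqn0.
by have := max_card (mem S); rewrite card_ord.
Qed.

Lemma not_prop_pred ks : 0 < size ks -> (forall i : 'I_(size ks), 0 < nth 0 ks i) ->
  ~ ramsey_prop ks (Ramsey ks - 1).
Proof.
move=> s0 hpos h.
have [P minP] := RamseyP_of (proj2_sig (constructive_indefinite_description _ (ramsey_exists s0))).
case: (posnP (Ramsey ks)) => r0.
  rewrite r0 in h; have [i hi] := prop0 h; by have := hpos i; rewrite hi.
have := minP _ h; lia.
Qed.

Definition Pk k j := flatten (nseq j [:: k.-1; k.+1]).

Lemma size_Pk k j : size (Pk k j) = 2 * j.
Proof. elim: j => [|j IH] //=; rewrite IH; lia. Qed.

Lemma nth_Pk k j i : i < 2 * j -> nth 0 (Pk k j) i = if odd i then k.+1 else k.-1.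
Proof.
elim: j i => [|j IH] i; first by rewrite muln0.
case: i => [|[|i]] //= hi.
rewrite negbK IH //; lia.
Qed.

Lemma all_Pk k j : 2 < k -> all (fun x => 2 <= x) (Pk k j).
Proof. move=> k3; elim: j => [|j IH] //=; rewrite IH andbT; apply/andP; split; lia. Qed.

Lemma ord_nseq r (x : nat) (i : 'I_(size (nseq r x))) : (i : nat) < r.
Proof. by case: i => m /=; rewrite size_nseq. Qed.

Lemma ord_Pk k r (i : 'I_(size (Pk k r))) : (i : nat) < 2 * r.
Proof. by case: i => m /=; rewrite size_Pk. Qed.

Lemma product r k A B : 0 < r -> 2 < k ->
  ~ ramsey_prop (nseq r k.-1) A -> ~ ramsey_prop (nseq r k.+1) B ->
  ~ ramsey_prop (Pk k r) (A * B).
Proof.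
move=> r0 k3 nA nB HP.
have [c1 Hc1] : exists c1 : 'I_A -> 'I_A -> 'I_(size (nseq r k.-1)),
    forall (i : 'I_(size (nseq r k.-1))) (S : {set 'I_A}), #|S| = nth 0 (nseq r k.-1) i -> ~ monoc c1 i S.
  apply: NNPP => h; apply: nA => c; apply: NNPP => h2; apply: h; exists c => i S cS m.
  by apply: h2; exists i, S.
have [c2 Hc2] : exists c2 : 'I_B -> 'I_B -> 'I_(size (nseq r k.+1)),
    forall (i : 'I_(size (nseq r k.+1))) (S : {set 'I_B}), #|S| = nth 0 (nseq r k.+1) i -> ~ monoc c2 i S.
  apply: NNPP => h; apply: nB => c; apply: NNPP => h2; apply: h; exists c => i S cS m.
  by apply: h2; exists i, S.
have Bpos : forall x : 'I_(A * B), 0 < B.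
  move=> x; have h : (x : nat) < A * B := ltn_ord x; move: (x : nat) h => m h.
  by rewrite lt0n; apply/eqP => B0; move: h; rewrite B0 muln0.
have qlt : forall x : 'I_(A * B), x %/ B < A.
  by move=> x; rewrite ltn_divLR ?(Bpos x) // ltn_ord.
have rlt : forall x : 'I_(A * B), x %% B < B.
  by move=> x; rewrite ltn_pmod ?(Bpos x).
pose q (x : 'I_(A * B)) : 'I_A := Ordinal (qlt x).
pose rm (x : 'I_(A * B)) : 'I_B := Ordinal (rlt x).
have sP : 0 < size (Pk k r) by rewrite size_Pk; lia.
pose d0 : 'I_(size (Pk k r)) := Ordinal sP.
pose c x y := insubd d0 (if q x != q y then 2 * c1 (q x) (q y) else (2 * c2 (rm x) (rm y)).+1).
have cval : forall x y, val (c x y) =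
    if q x != q y then 2 * c1 (q x) (q y) else (2 * c2 (rm x) (rm y)).+1.
  move=> x y; rewrite val_insubd ifT // size_Pk.
  have := ord_nseq (c1 (q x) (q y)); have := ord_nseq (c2 (rm x) (rm y)).
  by case: ifP => _ h1 h2; lia.
have [i [S [cS mS]]] := HP c.
have hi : i < 2 * r := ord_Pk i.
rewrite nth_Pk // in cS.
have hh := odd_double_half i; rewrite -muln2 in hh.
have h2lt : i./2 < r by lia.
have divq : forall x y, q x = q y -> x %/ B = y %/ B by move=> x y /(congr1 val).
have divle : forall (x y : 'I_(A * B)), x < y -> q x <= q y by move=> x y xy; apply: leq_div2r; lia.
case: (boolP (odd i)) => oi; [rewrite oi in cS hh | rewrite (negbTE oi) in cS hh].
- pose i2 : 'I_(size (nseq r k.+1)) := Ordinal (n:=size (nseq r k.+1)) (m:=i./2) ltac:(by rewrite size_nseq).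
  have key : forall x y, x \in S -> y \in S -> x < y -> q x = q y /\ c2 (rm x) (rm y) = i2.
    move=> x y xS yS xy; have := mS x y xS yS xy; move/(congr1 val); rewrite cval.
    case: ifP => h e.
      exfalso; move: oi; by rewrite -e oddM.
    split; first by apply/eqP; move/negbFE: h.
    apply: val_inj => /=.
    have e' : (2 * c2 (rm x) (rm y)).+1 = nat_of_ord i := e.
    simpl in hh; lia.
  have keyq : forall x y, x \in S -> y \in S -> q x = q y.
    move=> x y xS yS; case: (ltngtP x y) => h.
    - by case: (key x y xS yS h).
    - by case: (key y x yS xS h).
    - by rewrite (val_inj h).
  apply: (Hc2 i2 (rm @: S)).
    rewrite card_in_imset ?cS /= ?nth_nseq ?h2lt //.
    move=> x y xS yS /(congr1 val) /= e; apply: val_inj.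
    change (nat_of_ord x = nat_of_ord y).
    have := divq _ _ (keyq x y xS yS) => e2.
    by rewrite (divn_eq x B) (divn_eq y B) e e2.
  move=> u v /imsetP [x xS ->] /imsetP [y yS ->] uv.
  case: (ltngtP x y) => h.
  - by case: (key x y xS yS h).
  - exfalso; have e2 := divq _ _ (keyq x y xS yS).
    have := divn_eq x B; have := divn_eq y B; move: uv h => /=; rewrite e2; lia.
  - by move: uv; rewrite (val_inj h) ltnn.
- pose i2 : 'I_(size (nseq r k.-1)) := Ordinal (n:=size (nseq r k.-1)) (m:=i./2) ltac:(by rewrite size_nseq).
  have key : forall x y, x \in S -> y \in S -> x < y -> q x != q y /\ c1 (q x) (q y) = i2.
    move=> x y xS yS xy; have := mS x y xS yS xy; move/(congr1 val); rewrite cval.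
    case: ifP => h e.
      split => //; apply: val_inj => /=.
      have e' : 2 * c1 (q x) (q y) = nat_of_ord i := e.
      simpl in hh; lia.
    exfalso; move: oi; by rewrite -e /= oddM.
  apply: (Hc1 i2 (q @: S)).
    rewrite card_in_imset ?cS /= ?nth_nseq ?h2lt //.
    move=> x y xS yS e; case: (ltngtP x y) => h.
    - by case: (key x y xS yS h); rewrite e eqxx.
    - by case: (key y x yS xS h); rewrite e eqxx.
    - exact: val_inj.
  move=> u v /imsetP [x xS ->] /imsetP [y yS ->] uv.
  case: (ltngtP x y) => h.
  - by case: (key x y xS yS h).
  - by have := divle _ _ h; rewrite leqNgt uv.
  - by move: uv; rewrite (val_inj h) ltnn.
Qed.

Lemma chain k : DiagonalConjecture -> 2 < k ->
  forall j m, Ramsey (Pk k j ++ nseq (2 * m) k) <= Ramsey (nseq (2 * (m + j)) k).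
Proof.
move=> DC k3; elim=> [|j IH] m; first by rewrite addn0.
have e1 : Ramsey (Pk k j.+1 ++ nseq (2 * m) k) =
          Ramsey [:: k.-1, k.+1 & nseq (2 * m) k ++ Pk k j].
  apply: Ramsey_ext => n.
  rewrite /Pk -/(Pk k j) /= -/(Pk k j).
  change (k.-1 :: k.+1 :: (Pk k j ++ nseq (2 * m) k)) with ([:: k.-1; k.+1] ++ Pk k j ++ nseq (2 * m) k).
  change (k.-1 :: k.+1 :: (nseq (2 * m) k ++ Pk k j)) with ([:: k.-1; k.+1] ++ nseq (2 * m) k ++ Pk k j).
  by split; apply: swap_prop.
have e2 : Ramsey (Pk k j ++ nseq (2 * m.+1) k) = Ramsey (nseq (2 * m.+1) k ++ Pk k j).
  apply: Ramsey_ext => n.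
  by split => h; apply: (@swap_prop [::]).
have hDC := DC k k (nseq (2 * m) k ++ Pk k j) k3 (leqnn k).
have hall : all (fun x => 2 <= x) (nseq (2 * m) k).
  by apply/allP => x; rewrite mem_nseq => /andP [_ /eqP ->]; lia.
rewrite all_cat all_Pk // hall in hDC.
have hDC' := hDC isT.
have h3 := IH m.+1; rewrite e2 addSnnS in h3; rewrite e1.
apply: leq_trans h3.
rewrite (_ : 2 * m.+1 = (2 * m).+2); last by lia.
apply: hDC'.
Qed.

Theorem lemma1 :
  DiagonalConjecture ->
  forall k r : nat, 3 <= k -> 1 <= r ->
    (Ramsey_diag r k.-1 - 1) * (Ramsey_diag r k.+1 - 1)
      <= Ramsey_diag (2 * r) k - 1.
Proof.
move=> DC k r k3 r1.
have nA : ~ ramsey_prop (nseq r k.-1) (Ramsey_diag r k.-1 - 1).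
  apply: not_prop_pred; first by rewrite size_nseq.
  move=> i; rewrite nth_nseq ord_nseq; lia.
have nB : ~ ramsey_prop (nseq r k.+1) (Ramsey_diag r k.+1 - 1).
  apply: not_prop_pred; first by rewrite size_nseq.
  move=> i; rewrite nth_nseq ord_nseq; lia.
have Hprod := product r1 k3 nA nB.
have sP : 0 < size (Pk k r) by rewrite size_Pk; lia.
have [N HN] := ramsey_exists sP.
have [PP minP] := RamseyP_of HN.
have lt : (Ramsey_diag r k.-1 - 1) * (Ramsey_diag r k.+1 - 1) < Ramsey (Pk k r).
  rewrite ltnNge; apply/negP => h; apply: Hprod; exact: prop_mono h PP.
have ch := chain DC k3 r 0.
rewrite muln0 /= cats0 add0n in ch.
rewrite /Ramsey_diag; move: lt ch; rewrite /Ramsey_diag; lia.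
Qed.
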